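(* There is a polynomial $P$ such that for every MEMDP $\Gamma=(Q,A,E,(\delta_e)_{e\in E})$ with rational transition probabilities there is a function $\varepsilon\mapsto m(\Gamma,\varepsilon)\in\mathbb N$ satisfying, for all $0<\varepsilon<1$, $m(\Gamma,\varepsilon)\le P(k,2^l,x)$ where $k=|E|$, $l$ is the maximum number of bits needed to write any transition probability of $\Gamma$ (numerator and denominator in binary), and $x=\lceil\log_2(1/\varepsilon)\rceil$; and such that for every prior $b\in\mathcal D(E)$, every state $q\in Q$, every strategy $\sigma\in\mathrm{Strat}(Q,A)$ and every environment $e\in E$: $$\mathbb P^\sigma_q\big[\Gamma[e],\ \{\rho:\mathrm{nb}_{\mathrm{dstg}}(\rho)\ge m(\Gamma,\varepsilon)\}\cap \mathrm{NeverSmallBelief}(b,\varepsilon)\big]\le\varepsilon .$$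
   Context: For a set $X$, $\mathcal D(X)$ is the set of distributions on $X$ (countable support, summing to 1). An MDP is $G=(Q,A,\delta)$ with $Q,A$ finite non-empty and $\delta:Q\times A\to\mathcal D(Q)$; finite runs are in $Q\cdot(A\cdot Q)^*$, infinite runs in $(Q\cdot A)^\omega$; a strategy is $\sigma:Q\cdot(A\cdot Q)^*\to\mathcal D(A)$, and $\mathbb P^\sigma_q[G,\cdot]$ is the induced probability measure on infinite runs from $q$ (the cylinder of $q_0(a_1,q_1)\cdots(a_n,q_n)$ has probability $[q_0=q]\prod_i\sigma(\text{prefix up to }q_{i-1})(a_i)\delta(q_{i-1},a_i)(q_i)$). An MEMDP is $\Gamma=(Q,A,E,(\delta_e)_{e\in E})$ with $E$ finite non-empty and each $\Gamma[e]=(Q,A,\delta_e)$ an MDP. A pair $(q,a)$ is $(e,e')$-distinguishing ($e\ne e'$) if $\delta_e(q,a)\ne\delta_{e'}(q,a)$; $\mathrm{Dstg}(\Gamma)$ is the set of pairs that are $(e,e')$-distinguishing for some $e\ne e'$. Belief update: for $b\in\mathcal D(E)$, $p[b,q,a](q'):=\sum_e b(e)\delta_e(q,a)(q')$, and if $p[b,q,a](q')>0$, $\lambda[b,q,a,q'](e):=b(e)\delta_e(q,a)(q')/p[b,q,a](q')$ (arbitrary distribution otherwise). The likelihood map is $\mathrm{lk}_b(q):=b$ and $\mathrm{lk}_b(\rho\cdot(a,q')):=\lambda[\mathrm{lk}_b(\rho),\mathrm{last}(\rho),a,q']$. For an infinite run $\rho$, $\mathrm{nb}_{\mathrm{dstg}}(\rho)\in\mathbb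 N\cup\{\infty\}$ is the number of positions $i$ with $(q_i,a_i)\in\mathrm{Dstg}(\Gamma)$, writing $\rho=(q_0,a_0)(q_1,a_1)\cdots$. $\mathrm{NeverSmallBelief}(b,\varepsilon)$ is the set of infinite runs all of whose finite prefixes $\pi\in Q\cdot(A\cdot Q)^*$ satisfy $\mathrm{lk}_b(\pi)(e')>\varepsilon$ for all $e'\in E$. *)

(* Defs.v *)
From HB Require Import structures.
From mathcomp Require Import all_boot all_order all_algebra.
From mathcomp Require Import all_classical all_reals.
From mathcomp Require Import measure.
From mathcomp Require Import Rstruct.
From Stdlib Require Rdefinitions.

Set Implicit Arguments.
Unset Strict Implicit.
Unset Printing Implicit Defensive.

Import Order.TTheory GRing.Theory Num.Theory.
Local Open Scope ring_scope.
Local Open Scope classical_set_scope.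

Definition R := Rdefinitions.R.

(* A polynomial is a finite list of monomials (c, (i, j, h)) meaning c * X^i * Y^j * Z^h. *)
Definition poly3 := seq (nat * (nat * nat * nat)).
Definition eval_poly3 (P : poly3) (X Y Z : nat) : nat :=
  \sum_(mo <- P) mo.1 * X ^ mo.2.1.1 * Y ^ mo.2.1.2 * Z ^ mo.2.2.

(* number of bits of the binary representation of a natural number (0 is written "0") *)
Definition bitlen (n : nat) : nat := if n == 0%N then 1%N else (trunc_log 2 n).+1.
Definition rat_bits (r : rat) : nat := (bitlen (absz (numq r)) + bitlen (absz (denq r)))%N.

Definition ceil_log2_inv (eps : R) : nat :=
  if pselect (exists n : nat, eps^-1 <= 2 ^+ n) is left h then ex_minn h else 0%N.

Section MEMDP.
Variables (Q A E : finType).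
(* delta e q a q' : probability to go to q' when playing a in q, in environment e *)
Variable delta : E -> Q -> A -> Q -> rat.

Definition is_distr (T : finType) (d : T -> R) : Prop :=
  (forall t, 0 <= d t) /\ \sum_(t : T) d t = 1.

Definition is_memdp : Prop :=
  (0 < #|Q|)%N /\ (0 < #|A|)%N /\ (0 < #|E|)%N /\
  forall e q a, (forall q', 0 <= delta e q a q') /\ \sum_(q' : Q) delta e q a q' = 1.

Definition max_bits : nat :=
  \max_(e : E) \max_(q : Q) \max_(a : A) \max_(q' : Q) rat_bits (delta e q a q').

Definition dstg (qa : Q * A) : bool :=
  [exists e : E, exists e' : E,
     (e != e') && [exists q' : Q, delta e qa.1 qa.2 q' != delta e' qa.1 qa.2 q']].

(* finite runs q0 (a1,q1) ... (an,qn) *)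
Definition frun := (Q * seq (A * Q))%type.
(* infinite runs (q0,a0)(q1,a1)... *)
Definition irun := nat -> Q * A.

Definition prefix (rho : irun) (n : nat) : frun :=
  ((rho 0%N).1, [seq ((rho i).2, (rho i.+1).1) | i <- iota 0 n]).

(* nb_dstg(rho) >= m  (nb_dstg in N u {oo}) *)
Definition dstg_count (rho : irun) (n : nat) : nat :=
  count (fun i => dstg (rho i)) (iota 0 n).
Definition nb_dstg_ge (rho : irun) (m : nat) : Prop :=
  exists n, (m <= dstg_count rho n)%N.

(* belief update; [dflt] is the arbitrary distribution used when p[b,q,a](q') = 0 *)
Variable dflt : (E -> R) -> Q -> A -> Q -> (E -> R).
Definition pb (b : E -> R) (q : Q) (a : A) (q' : Q) : R :=
  \sum_(e : E) b e * ratr (delta e q a q').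
Definition lam (b : E -> R) (q : Q) (a : A) (q' : Q) : E -> R :=
  if 0 < pb b q a q' then fun e => b e * ratr (delta e q a q') / pb b q a q'
  else dflt b q a q'.
Definition lk (b : E -> R) (pi : frun) : E -> R :=
  (foldl (fun bq aq => (lam bq.1 bq.2 aq.1 aq.2, aq.2)) (b, pi.1) pi.2).1.

Definition NeverSmallBelief (b : E -> R) (eps : R) : set irun :=
  [set rho | forall n (e' : E), eps < lk b (prefix rho n) e'].

Definition strategy := frun -> A -> R.
Definition is_strategy (sigma : strategy) : Prop := forall pi, is_distr (sigma pi).

Definition cyl_prob (e : E) (sigma : strategy) (q : Q) (pi : frun) : R :=
  (pi.1 == q)%:R *
  \prod_(i < size pi.2)
     (let st := last pi.1 (map snd (take i pi.2)) in
      let aq := tnth (in_tuple pi.2) i in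
      sigma (pi.1, take i pi.2) aq.1 * ratr (delta e st aq.1 aq.2)).
End MEMDP.

(* the (pointed) type of infinite runs; the point is irrelevant, needed by the library *)
Definition RunT (Q A : finType) (x0 : Q * A) := irun Q A.
Arguments RunT {Q A} x0.
HB.instance Definition _ (Q A : finType) (x0 : Q * A) :=
  Choice.on (RunT x0).
HB.instance Definition _ (Q A : finType) (x0 : Q * A) :=
  isPointed.Build (RunT x0) (fun _ => x0).

Definition cylinder (Q A : finType) (x0 : Q * A) (pi : frun Q A) : set (RunT x0) :=
  [set rho | prefix rho (size pi.2) = pi].
Arguments cylinder {Q A} x0 pi.
Definition cylinders (Q A : finType) (x0 : Q * A) : set (set (RunT x0)) :=
  [set C | exists pi, C = cylinder x0 pi].
Arguments cylinders {Q A} x0.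
Definition RunSpace (Q A : finType) (x0 : Q * A) := g_sigma_algebraType (cylinders x0).
Arguments RunSpace {Q A} x0.

(* mu is the probability measure P^sigma_q[Gamma[e], .] on infinite runs,
   characterized by its values on cylinders *)
Definition is_run_measure (Q A E : finType) (delta : E -> Q -> A -> Q -> rat)
  (x0 : Q * A) (e : E) (sigma : strategy Q A) (q : Q)
  (mu : {measure set (RunSpace x0) -> \bar R}) : Prop :=
  mu setT = 1%E /\
  forall pi : frun Q A, mu (cylinder x0 pi) = (cyl_prob delta e sigma q pi)%:E.
Arguments is_run_measure {Q A E} delta x0 e sigma q mu.

(* Main.v *)
Require Import Defs.
From HB Require Import structures.
From mathcomp Require Import all_boot all_order all_algebra.
From mathcomp Require Import all_classical all_reals.
From mathcomp Require Import measure.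
From mathcomp Require Import Rstruct.
From mathcomp Require Import all_analysis.
From mathcomp Require Import ring lra zify.
Import Order.TTheory GRing.Theory Num.Theory.
Local Open Scope ring_scope.
Local Open Scope classical_set_scope.
Set Implicit Arguments.
Unset Strict Implicit.
Unset Printing Implicit Defensive.
Section Comb.
Variables (Q A E : finType) (delta : E -> Q -> A -> Q -> rat).

Definition lastS (p : Q) (s : seq (A * Q)) : Q := last p (map snd s).

Fixpoint cntd (p : Q) (s : seq (A * Q)) : nat :=
  if s is x :: s' then (dstg delta (p, x.1) + cntd x.2 s')%N else 0%N.

Lemma cntd_rcons p s x : cntd p (rcons s x) = (cntd p s + dstg delta (lastS p s, x.1))%N.
Proof.
elim: s p => [|y s IH] p /=; first by rewrite addn0.
by rewrite IH addnA.
Qed.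

Lemma foldl_snd (T : Type) (f : T -> Q -> A -> Q -> T) (b : T) p s :
  (foldl (fun bq aq => (f bq.1 bq.2 aq.1 aq.2, aq.2)) (b, p) s).2 = lastS p s.
Proof. by elim: s b p => [|[a q'] s IH] b p //=; rewrite IH. Qed.

Lemma lk_rcons dflt b p s a q' :
  lk delta dflt b (p, rcons s (a, q')) = lam delta dflt (lk delta dflt b (p, s)) (lastS p s) a q'.
Proof.
rewrite /lk /= foldl_rcons /=.
by rewrite -(foldl_snd (lam delta dflt) b p s).
Qed.

Lemma lk_nil dflt b p : lk delta dflt b (p, [::]) = b.
Proof. by []. Qed.

Definition cstep e (sigma : strategy Q A) (p : Q) (s : seq (A * Q)) (x0 : A * Q) (i : nat) : R :=
  sigma (p, take i s) (nth x0 s i).1 *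
  ratr (delta e (last p (map snd (take i s))) (nth x0 s i).1 (nth x0 s i).2).

Lemma cyl_probE e sigma q p s x0 :
  cyl_prob delta e sigma q (p, s) =
  (p == q)%:R * \prod_(0 <= i < size s) cstep e sigma p s x0 i.
Proof.
rewrite /cyl_prob /= big_mkord; congr (_ * _); apply: eq_bigr => i _.
by rewrite /cstep (tnth_nth x0).
Qed.

Lemma cyl_rcons e sigma q p s a q' :
  cyl_prob delta e sigma q (p, rcons s (a, q')) =
  cyl_prob delta e sigma q (p, s) * sigma (p, s) a * ratr (delta e (lastS p s) a q').
Proof.
rewrite !(cyl_probE _ _ _ _ _ (a, q')) size_rcons big_nat_recr //=.
rewrite -!mulrA; congr (_ * _); congr (_ * _).
  apply: eq_big_nat => i /andP [_ hi].
  by rewrite /cstep nth_rcons hi -cats1 takel_cat // ltnW.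
by rewrite /cstep nth_rcons ltnn eqxx -cats1 take_size_cat.
Qed.
End Comb.
Section Pref.
Variables (Q A E : finType) (delta : E -> Q -> A -> Q -> rat).

Lemma prefixS (rho : irun Q A) n :
  Defs.prefix rho n.+1 = ((rho 0%N).1, rcons (Defs.prefix rho n).2 ((rho n).2, (rho n.+1).1)).
Proof. by rewrite /Defs.prefix -[n.+1]addn1 iotaD map_cat /= cats1 add0n addn1. Qed.

Lemma prefix_size (rho : irun Q A) n : size (Defs.prefix rho n).2 = n.
Proof. by rewrite /Defs.prefix /= size_map size_iota. Qed.

Lemma lastS_prefix (rho : irun Q A) n : lastS (rho 0%N).1 (Defs.prefix rho n).2 = (rho n).1.
Proof.
case: n => [//|n]; rewrite prefixS /lastS map_rcons last_rcons //.
Qed.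

Lemma dstg_countE (rho : irun Q A) n :
  dstg_count delta rho n = cntd delta (rho 0%N).1 (Defs.prefix rho n).2.
Proof.
elim: n => [//|n IH].
rewrite prefixS cntd_rcons -IH lastS_prefix /dstg_count -[n.+1]addn1 iotaD count_cat /= addn0.

by rewrite -surjective_pairing.
Qed.

Lemma dstg_count_mono (rho : irun Q A) n n' : (n <= n')%N ->
  (dstg_count delta rho n <= dstg_count delta rho n')%N.
Proof.
move=> h; rewrite /dstg_count -(subnKC h) iotaD count_cat; exact: leq_addr.
Qed.

Fixpoint runs (n : nat) : seq (seq (A * Q)) :=
  if n is n'.+1 then [seq rcons s x | s <- runs n', x <- index_enum (prod A Q)]
  else [:: [::]].

Lemma prefix_runs (rho : irun Q A) n : (Defs.prefix rho n).2 \in runs n.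
Proof.
elim: n => [|n IH]; first by rewrite inE.
by rewrite prefixS /=; apply: allpairs_f => //; rewrite mem_index_enum.
Qed.

Lemma prefix0 (rho : irun Q A) : Defs.prefix rho 0 = ((rho 0%N).1, [::]).
Proof. by []. Qed.
End Pref.
Lemma sqrt_ineq (x y : R) : 0 <= x <= 1 -> 0 <= y <= 1 ->
  Num.sqrt (x * y) <= (x + y) / 2 - (x - y) ^+ 2 / 8.
Proof.
move=> /andP [hx0 hx1] /andP [hy0 hy1].
rewrite sqrtrM //.
have hu := sqr_sqrtr hx0; have hv := sqr_sqrtr hy0.
have hu0 := sqrtr_ge0 x; have hv0 := sqrtr_ge0 y.
move: (Num.sqrt x) (Num.sqrt y) hu hv hu0 hv0 => u v hu hv hu0 hv0.
rewrite -hu -hv in hx1 hy1 *.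
have hu1 : u <= 1 by nra.
have hv1 : v <= 1 by nra.
have h4 : (u + v) ^+ 2 <= 4 by nra.
have h5 : 0 <= (u - v) ^+ 2 by exact: sqr_ge0.
have h6 : (u ^+ 2 - v ^+ 2) ^+ 2 <= 4 * (u - v) ^+ 2.
  have -> : (u ^+ 2 - v ^+ 2) ^+ 2 = (u - v) ^+ 2 * (u + v) ^+ 2 by ring.
  rewrite [4 * _]mulrC; exact: ler_wpM2l.
have -> : u * v = (u ^+ 2 + v ^+ 2) / 2 - (u - v) ^+ 2 / 2 by field.
lra.
Qed.

Lemma rat_gap (p q : rat) (N : nat) : p != q -> (denq p <= N%:Z)%R -> (denq q <= N%:Z)%R ->
  ((N%:R ^+ 2)^-1 <= `|p - q|)%R.
Proof.
move=> hpq hp hq.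
have dp0 := denq_gt0 p; have dq0 := denq_gt0 q.
set z := (numq p * denq q - numq q * denq p)%R.
have hz : ((p - q) * ((denq p)%:~R * (denq q)%:~R) = z%:~R :> rat)%R.
  by rewrite /z rmorphB !rmorphM /= !numqE; ring.
have hz0 : z != 0.
  apply: contra hpq => /eqP z0; move: hz; rewrite z0 mulr0z => /eqP.
  rewrite mulf_eq0 mulf_eq0 !intr_eq0 (gt_eqF dp0) (gt_eqF dq0) !orbF subr_eq0.
  done.
have h1 : (1 <= `|z%:~R : rat|)%R.
  rewrite -intr_norm ler1z; move: hz0; lia.
rewrite -hz normrM in h1.
have hN : ((denq p)%:~R * (denq q)%:~R <= N%:R ^+ 2 :> rat)%R.
  rewrite expr2; apply: ler_pM.
  - by rewrite ler0z ltW.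
  - by rewrite ler0z ltW.
  - by move: hp; rewrite -(ler_int rat).
  - by move: hq; rewrite -(ler_int rat).
have hd0 : (0 < (denq p)%:~R * (denq q)%:~R :> rat)%R by rewrite mulr_gt0 ?ltr0z.
rewrite (ger0_norm (ltW hd0)) in h1.
have hN0 : (0 < N%:R ^+ 2 :> rat)%R by apply: lt_le_trans hN.
rewrite -(@ler_pM2r _ (N%:R ^+ 2)) // mulVf ?gt_eqF //.
apply: le_trans h1 _; rewrite ler_pM2l ?normr_gt0 ?subr_eq0 //.
Qed.
Section Real.
Variables (Q A E : finType) (delta : E -> Q -> A -> Q -> rat).
Hypothesis Hd : forall e q a q', 0 <= delta e q a q'.
Hypothesis Hs : forall e q a, \sum_(q' : Q) delta e q a q' = 1.
Variable dflt : (E -> R) -> Q -> A -> Q -> (E -> R).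
Hypothesis Hdflt : forall b q a q', is_distr (dflt b q a q').

Local Notation d e p a q' := (ratr (delta e p a q') : R).

Lemma d_ge0 e p a q' : 0 <= d e p a q'.
Proof. by rewrite ler0q. Qed.

Lemma d_sum e p a : \sum_(q' : Q) d e p a q' = 1.
Proof. by rewrite -rmorph_sum Hs rmorph1. Qed.

Lemma d_le1 e p a q' : d e p a q' <= 1.
Proof.
rewrite -(d_sum e p a) (bigD1 q') //= lerDl; apply: sumr_ge0 => i _; exact: d_ge0.
Qed.

Lemma pb_ge (L : E -> R) p a q' e : (forall e, 0 <= L e) ->
  L e * d e p a q' <= pb delta L p a q'.
Proof.
move=> hL; rewrite /pb (bigD1 e) //= lerDl; apply: sumr_ge0 => i _.
by rewrite mulr_ge0 // d_ge0.
Qed.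

Lemma pb_ge0 (L : E -> R) p a q' : (forall e, 0 <= L e) -> 0 <= pb delta L p a q'.
Proof. move=> hL; apply: sumr_ge0 => i _; by rewrite mulr_ge0 // d_ge0. Qed.

Lemma lam_distr (L : E -> R) p a q' : is_distr L -> is_distr (lam delta dflt L p a q').
Proof.
move=> [hL0 hL1]; rewrite /lam; case: ifP => hp; last exact: Hdflt.
split.
  move=> t; apply: divr_ge0; [apply: mulr_ge0 => //; exact: d_ge0 | exact: ltW].
by rewrite -mulr_suml divff // gt_eqF.
Qed.

Lemma lk_distr (b : E -> R) p s : is_distr b -> is_distr (lk delta dflt b (p, s)).
Proof.
move=> hb; elim/last_ind: s => [//|s [a q'] IH].
rewrite lk_rcons; exact: lam_distr.
Qed.

Lemma lam_pos (L : E -> R) p a q' e : is_distr L -> 0 < L e -> 0 < d e p a q' ->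
  0 < lam delta dflt L p a q' e.
Proof.
move=> [hL0 _] hLe hd.
have hpb : 0 < pb delta L p a q' by apply: lt_le_trans (pb_ge _ _ _ e hL0); rewrite mulr_gt0.
by rewrite /lam hpb divr_gt0 // mulr_gt0.
Qed.

Lemma cyl_ge0 e sigma q p s : is_strategy sigma -> 0 <= cyl_prob delta e sigma q (p, s).
Proof.
move=> hs; elim/last_ind: s => [|s [a q'] IH].
  by rewrite /cyl_prob /= big_ord0 mulr1; case: eqP.
rewrite cyl_rcons; apply: mulr_ge0; last exact: d_ge0.
apply: mulr_ge0 => //; by case: (hs (p, s)).
Qed.

Lemma lk_pos e sigma q p s (b : E -> R) : is_distr b -> 0 < b e ->
  cyl_prob delta e sigma q (p, s) != 0 -> 0 < lk delta dflt b (p, s) e.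
Proof.
move=> hb hbe; elim/last_ind: s => [//|s [a q'] IH].
rewrite cyl_rcons => hne.
have hc : cyl_prob delta e sigma q (p, s) != 0.
  by apply: contraNneq hne => ->; rewrite !mul0r.
have hd : d e (lastS p s) a q' != 0.
  by apply: contraNneq hne => ->; rewrite !mulr0.
rewrite lk_rcons; apply: lam_pos; first exact: lk_distr.
  exact: IH hc.
by rewrite lt_def hd d_ge0.
Qed.

Lemma keyK (L : E -> R) p a q' e e' : is_distr L -> 0 < L e ->
  d e p a q' * Num.sqrt (lam delta dflt L p a q' e' / lam delta dflt L p a q' e) =
  Num.sqrt (L e' / L e) * Num.sqrt (d e p a q' * d e' p a q').
Proof.
move=> [hL0 _] hLe.
have [h0|hpos] := eqVneq (d e p a q') 0.
  by rewrite h0 !mul0r sqrtr0 mulr0.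
have hdp : 0 < d e p a q' by rewrite lt_def hpos d_ge0.
have hpb : 0 < pb delta L p a q' by apply: lt_le_trans (pb_ge _ _ _ e hL0); rewrite mulr_gt0.
rewrite /lam hpb.
have -> : L e' * d e' p a q' / pb delta L p a q' / (L e * d e p a q' / pb delta L p a q') =
          (L e' / L e) * (d e' p a q' / d e p a q').
  by field; rewrite !gt_eqF.
rewrite sqrtrM ?divr_ge0 ?hL0 ?ltW // mulrC -mulrA; congr (_ * _).
rewrite -[X in _ * X = _](ger0_norm (ltW hdp)) -sqrtr_sqr -sqrtrM; last first.
  by apply: divr_ge0; [exact: d_ge0 | exact: ltW].
by congr Num.sqrt; field; rewrite gt_eqF.
Qed.
Definition diffb e e' p a := [exists q', delta e p a q' != delta e' p a q'].

Variable N : nat.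
Hypothesis HN : forall e p a q', (denq (delta e p a q') <= N%:Z)%R.
Definition cst : R := (N%:R ^+ 2)^-1 ^+ 2 / 8.

Lemma d_gap e e' p a q' : delta e p a q' != delta e' p a q' ->
  cst <= (d e p a q' - d e' p a q') ^+ 2 / 8.
Proof.
move=> hne; rewrite /cst ler_pM2r; last by rewrite invr_gt0.
have g := rat_gap hne (HN e p a q') (HN e' p a q').
rewrite -(ler_rat R) ratr_norm rmorphB fmorphV rmorphXn /= ratr_nat in g.
have h0 : 0 <= (N%:R ^+ 2)^-1 :> R by rewrite invr_ge0 exprn_ge0.
rewrite -[X in _ <= X](real_normK (num_real _)) !expr2.
by apply: ler_pM.
Qed.

Lemma hell e e' p a :
  \sum_(q' : Q) Num.sqrt (d e p a q' * d e' p a q') <= 1 - (if diffb e e' p a then cst else 0).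
Proof.
apply: le_trans (_ : \sum_(q' : Q) ((d e p a q' + d e' p a q') / 2 - (d e p a q' - d e' p a q') ^+ 2 / 8) <= _).
  apply: ler_sum => q' _; apply: sqrt_ineq; by rewrite d_ge0 d_le1.
rewrite sumrB -mulr_suml big_split /= !d_sum.
have -> : (1 + 1) / 2 = 1 :> R by field.
rewrite lerD2l lerN2.
case: ifP => [/existsP [q0 hq0]|_]; last by apply: sumr_ge0 => i _; rewrite divr_ge0 ?sqr_ge0.
rewrite (bigD1 q0) //=; apply: le_trans (d_gap hq0) _.
rewrite lerDl; apply: sumr_ge0 => i _; by rewrite divr_ge0 ?sqr_ge0.
Qed.
End Real.
Section Mart.
Variables (Q A E : finType) (delta : E -> Q -> A -> Q -> rat).
Hypothesis Hd : forall e q a q', 0 <= delta e q a q'.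
Hypothesis Hs : forall e q a, \sum_(q' : Q) delta e q a q' = 1.
Variable dflt : (E -> R) -> Q -> A -> Q -> (E -> R).
Hypothesis Hdflt : forall b q a q', is_distr (dflt b q a q').
Variable N : nat.
Hypothesis HN : forall e p a q', (denq (delta e p a q') <= N%:Z)%R.
Variables (e : E) (q : Q) (sigma : strategy Q A) (b : E -> R).
Hypothesis Hsig : is_strategy sigma.
Hypothesis Hb : is_distr b.
Hypothesis Hbe : 0 < b e.

Local Notation d e p a q' := (ratr (delta e p a q') : R).
Local Notation c := (cst N).
Definition w : R := 1 + c.

Lemma cst_ge0 : 0 <= c.
Proof. by rewrite /cst divr_ge0 ?exprn_ge0 ?invr_ge0 ?exprn_ge0. Qed.

Fixpoint dcnt e' (p : Q) (s : seq (A * Q)) : nat :=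
  if s is x :: s' then (diffb delta e e' p x.1 + dcnt e' x.2 s')%N else 0%N.

Lemma dcnt_rcons e' p s x : dcnt e' p (rcons s x) = (dcnt e' p s + diffb delta e e' (lastS p s) x.1)%N.
Proof.
elim: s p => [|y s IH] p /=; first by rewrite addn0.
by rewrite IH addnA.
Qed.

Local Notation lkq s := (lk delta dflt b (q, s)).
Local Notation cyl s := (cyl_prob delta e sigma q (q, s)).

Definition G (s : seq (A * Q)) : R :=
  \sum_(e' : E) Num.sqrt (lkq s e' / lkq s e) * w ^+ dcnt e' q s.

Lemma G_ge0 s : 0 <= G s.
Proof. apply: sumr_ge0 => i _; by rewrite mulr_ge0 ?sqrtr_ge0 ?exprn_ge0 // addr_ge0 ?cst_ge0. Qed.

Lemma inner s a : 0 < lkq s e ->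
  \sum_(q' : Q) d e (lastS q s) a q' * G (rcons s (a, q')) <= G s.
Proof.
move=> hLe; set p := lastS q s.
have hL := lk_distr Hd Hdflt q s Hb.
rewrite /G.
under eq_bigr => q' _ do rewrite mulr_sumr.
rewrite exchange_big /=; apply: ler_sum => e' _.
under eq_bigr => q' _ do rewrite dcnt_rcons lk_rcons mulrA (keyK Hd dflt _ _ _ e' hL hLe) -/p.
rewrite -/p.
under eq_bigr => q' _ do rewrite mulrC mulrA.
rewrite /= -mulr_sumr exprD.
set S := \sum_(q' : Q) _.
set r := Num.sqrt _.
have -> : w ^+ dcnt e' q s * w ^+ diffb delta e e' p a * r * S =
          (r * w ^+ dcnt e' q s) * (w ^+ diffb delta e e' p a * S) by ring.
apply: ler_piMr; first by rewrite mulr_ge0 ?sqrtr_ge0 ?exprn_ge0 // addr_ge0 ?cst_ge0.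
rewrite /S.
have hh := hell Hd Hs HN e e' p a.
have hs0 : 0 <= \sum_(q' : Q) Num.sqrt (d e p a q' * d e' p a q') by apply: sumr_ge0 => i _; exact: sqrtr_ge0.
case: (diffb delta e e' p a) hh => /= hh.
  rewrite expr1 /w; apply: le_trans (ler_wpM2l _ hh) _; first by rewrite addr_ge0 ?cst_ge0.
  have := cst_ge0; nra.
by rewrite expr0 mul1r; rewrite subr0 in hh.
Qed.
Lemma cyl_nil : cyl [::] = 1.
Proof. by rewrite /cyl_prob /= big_ord0 eqxx mulr1. Qed.

Lemma step s :
  \sum_(x : A * Q) cyl (rcons s x) * G (rcons s x) <= cyl s * G s.
Proof.
have [h0|hne] := eqVneq (cyl s) 0.
  rewrite h0 mul0r big1 // => -[a q'] _; by rewrite cyl_rcons h0 !mul0r.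
have hLe := lk_pos Hd Hdflt Hb Hbe hne.
set p := lastS q s.
rewrite (eq_bigr (fun x => (cyl s * sigma (q, s) x.1) * (d e p x.1 x.2 * G (rcons s (x.1, x.2))))); last first.
  by move=> -[a q'] _; rewrite cyl_rcons -/p /= -!mulrA.
rewrite -(pair_bigA _ (fun a q' => (cyl s * sigma (q, s) a) * (d e p a q' * G (rcons s (a, q'))))) /=.
apply: le_trans (_ : \sum_(a : A) (cyl s * sigma (q, s) a) * G s <= _).
  apply: ler_sum => a _; rewrite -mulr_sumr; apply: ler_wpM2l.
    by rewrite mulr_ge0 ?cyl_ge0 //; case: (Hsig (q, s)) => h _; exact: h.
  exact: inner.
rewrite -mulr_suml -mulr_sumr; case: (Hsig (q, s)) => _ ->.
by rewrite mulr1.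
Qed.

Definition Sm n := \sum_(s <- runs Q A n) cyl s * G s.

Lemma Sm_le n : Sm n <= G [::].
Proof.
elim: n => [|n IH]; first by rewrite /Sm /= big_seq1 cyl_nil mul1r.
apply: le_trans IH; rewrite /Sm /= big_allpairs_dep /=.
by apply: ler_sum => s _; exact: step.
Qed.
Lemma dstg_diff p a : dstg delta (p, a) -> exists e', diffb delta e e' p a.
Proof.
move=> /existsP [e1 /existsP [e2 /andP [h12 /existsP [q' hq']]]] /=.
have [h1|h1] := eqVneq (delta e p a q') (delta e1 p a q').
  by exists e2; apply/existsP; exists q'; rewrite h1.
by exists e1; apply/existsP; exists q'.
Qed.

Lemma cnt_le_dsum p s : (cntd delta p s <= \sum_(e' : E) dcnt e' p s)%N.
Proof.
elim: s p => [|[a q'] s IH] p /=; first by rewrite big1.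
rewrite big_split /=; apply: leq_add (IH q').
case hd: (dstg delta (p, a)) => //.
have [e' he'] := dstg_diff hd.
by rewrite (bigD1 e') //= he'.
Qed.

Lemma pigeon (dd : nat) p s : (0 < dd)%N -> (#|E| * dd <= cntd delta p s)%N ->
  exists e', (dd <= dcnt e' p s)%N.
Proof.
move=> hdd h.
case: (boolP [exists e', (dd <= dcnt e' p s)%N]) => [/existsP [e' he']|]; first by exists e'.
rewrite negb_exists => /forallP hall.
have h2 : (\sum_(e' : E) dcnt e' p s <= \sum_(e' : E) dd.-1)%N.
  apply: leq_sum => e' _; move: (hall e'); rewrite -ltnNge; move: hdd; clear; case: dd => //.
rewrite sum_nat_const in h2.
have h3 := leq_trans h (leq_trans (cnt_le_dsum p s) h2).
have hE : (0 < #|E|)%N by apply/card_gt0P; exists e.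
rewrite -(prednK hdd) mulnS in h3; move: h3 hE; set m := (_ * _)%N; lia.
Qed.

Local Notation PP eps dd s := ((#|E| * dd <= cntd delta q s)%N && [forall e', eps < lkq s e']).

Lemma lk_le1 s e' : lkq s e' <= 1.
Proof.
have [h0 h1] := lk_distr Hd Hdflt q s Hb.
rewrite -h1 (bigD1 e') //= lerDl; exact: sumr_ge0.
Qed.

Lemma w_ge1 : 1 <= w.
Proof. by rewrite /w lerDl cst_ge0. Qed.

Lemma thresh eps dd s : 0 < eps <= 1 -> (0 < dd)%N -> PP eps dd s -> eps * w ^+ dd <= G s.
Proof.
move=> /andP [he0 he1] hdd /andP [hc /forallP hlk].
have [e' he'] := pigeon hdd hc.
rewrite /G (bigD1 e') //=.
apply: le_trans (_ : Num.sqrt (lkq s e' / lkq s e) * w ^+ dcnt e' q s <= _); last first.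
  rewrite lerDl; apply: sumr_ge0 => i _; by rewrite mulr_ge0 ?sqrtr_ge0 ?exprn_ge0 // addr_ge0 ?cst_ge0.
apply: ler_pM => //; first exact: ltW.
  by rewrite exprn_ge0 // addr_ge0 ?cst_ge0.
  have hle := hlk e.
  have hle2 := hlk e'.
  have hL1 := lk_le1 s e.
  have hr : eps < lkq s e' / lkq s e.
    apply: (lt_le_trans hle2); rewrite ler_pdivlMr; last exact: lt_trans hle.
    apply: ler_piMr => //; exact: ltW (lt_trans he0 hle2).
  have hr0 : 0 <= lkq s e' / lkq s e by apply: ltW; exact: lt_trans hr.
  have hs2 := sqr_sqrtr hr0; have hs0 := sqrtr_ge0 (lkq s e' / lkq s e).
  move: (Num.sqrt _) hs2 hs0 => t ht2 ht0.
  rewrite -ht2 in hr; nra.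
by apply: ler_weXn2l => //; exact: w_ge1.
Qed.

Lemma G_nil eps : 0 < eps <= 1 -> eps < b e -> G [::] <= #|E|%:R / eps.
Proof.
move=> /andP [he0 he1] hbe.
rewrite /G /= lk_nil.
have -> : #|E|%:R / eps = \sum_(e' : E) eps^-1 by rewrite sumr_const mulr_natl -mulr_natr.
apply: ler_sum => e' _; rewrite expr0 mulr1.
have [hb0 hb1] := Hb.
have hb1' : b e' <= 1 by rewrite -hb1 (bigD1 e') //= lerDl; exact: sumr_ge0.
have hz : b e' / b e <= eps^-1.
  rewrite ler_pdivrMr; last exact: lt_trans hbe.
  have h1 : 1 <= eps^-1 * b e by rewrite mulrC ler_pdivlMr // mul1r ltW.
  exact: le_trans hb1' h1.
have hz0 : 0 <= b e' / b e by rewrite divr_ge0 // ltW.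
have hi1 : 1 <= eps^-1 by rewrite invr_ge1 // unitfE gt_eqF.
have hs2 := sqr_sqrtr hz0; have hs0 := sqrtr_ge0 (b e' / b e).
move: (Num.sqrt _) hs2 hs0 => t ht2 ht0.
rewrite -ht2 in hz; nra.
Qed.

Lemma final_sum eps dd n : 0 < eps <= 1 -> eps < b e -> (0 < dd)%N ->
  \sum_(s <- runs Q A n) (PP eps dd s)%:R * cyl s <= #|E|%:R / eps / (eps * w ^+ dd).
Proof.
move=> he hbe hdd.
have hT : 0 < eps * w ^+ dd.
  case/andP: he => he0 _; rewrite mulr_gt0 // exprn_gt0 //; apply: lt_le_trans w_ge1; exact: ltr01.
apply: le_trans (_ : Sm n / (eps * w ^+ dd) <= _); last first.
  by rewrite ler_pM2r ?invr_gt0 //; apply: le_trans (Sm_le n) (G_nil he hbe).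
rewrite /Sm mulr_suml; apply: ler_sum => s _.
case hP: (PP eps dd s); last first.
  rewrite mul0r; apply: mulr_ge0; last by rewrite invr_ge0 ltW.
  by apply: mulr_ge0; [exact: cyl_ge0 | exact: G_ge0].
rewrite mul1r ler_pdivlMr // ; apply: ler_wpM2l; first exact: cyl_ge0.
exact: thresh.
Qed.
End Mart.
Section Meas.
Variables (Q A : finType) (x0 : Q * A).

Lemma level_meas (P : pred (frun Q A)) n :
  measurable [set rho : RunSpace x0 | P (Defs.prefix rho n)].
Proof.
have -> : [set rho : RunSpace x0 | P (Defs.prefix rho n)] =
  \bigcup_k (match unpickle k with
                      | Some pi => if P pi && (size pi.2 == n) then cylinder x0 pi else set0
                      | None => set0 end : set (RunSpace x0)).
  apply/seteqP; split => rho /=.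
    move=> hP; exists (pickle (Defs.prefix rho n)) => //.
    by rewrite pickleK hP prefix_size eqxx /cylinder /= prefix_size.
  case=> k _; case: (unpickle k) => [pi|] //; case: ifP => // /andP [hp /eqP hs].
  by rewrite /cylinder /= hs => ->.
apply: bigcupT_measurable => k; case: (unpickle k) => [pi|]; last exact: measurable0.
case: ifP => _; last exact: measurable0.
by apply: sub_sigma_algebra; exists pi.
Qed.
End Meas.
Lemma bern (c : R) n : 0 <= c -> 1 + n%:R * c <= (1 + c) ^+ n.
Proof.
move=> hc; elim: n => [|n IH]; first by rewrite mul0r addr0 expr0.
rewrite exprS; apply: le_trans (_ : (1 + c) * (1 + n%:R * c) <= _); last first.
  by apply: ler_wpM2l => //; rewrite addr_ge0.
have h0 : 0 <= n%:R * c * c by rewrite !mulr_ge0.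
rewrite -natr1; nra.
Qed.

Lemma w_pow (N : nat) : (0 < N)%N -> 2 <= w N ^+ (8 * N ^ 4).
Proof.
move=> hN; rewrite /w; apply: le_trans (bern _ (cst_ge0 N)).
have hN0 : (N%:R : R) != 0 by rewrite pnatr_eq0 -lt0n.
have -> : (8 * N ^ 4)%:R * cst N = 1.
  rewrite /cst natrM natrX; field; by rewrite hN0.
by rewrite (_ : 2 = 1 + 1 :> R).
Qed.

Lemma lerX (x y : R) n : 0 <= x -> x <= y -> x ^+ n <= y ^+ n.
Proof.
move=> hx hxy; apply: lerXn2r => //; rewrite nnegrE //; exact: le_trans hxy.
Qed.

Lemma final_arith (k N x : nat) (eps : R) : 0 < eps -> eps^-1 <= 2 ^+ x -> (0 < N)%N ->
  k%:R / eps / (eps * w N ^+ (8 * N ^ 4 * (3 * x + k))) <= eps.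
Proof.
move=> he hx hN.
set W := w N ^+ _.
have hW : 2 ^+ (3 * x + k) <= W.
  rewrite /W exprM; apply: lerX => //; exact: w_pow.
have hk : k%:R <= 2 ^+ k :> R.
  by rewrite -natrX ler_nat ltnW // ltn_expl.
set z := eps^-1 in hx.
have hz : eps * z = 1 by rewrite mulfV // gt_eqF.
have hz0 : 0 < z by rewrite invr_gt0.
have h2x : 0 <= 2 ^+ x :> R by rewrite exprn_ge0.
have hz3 : z ^+ 3 <= (2 ^+ x) ^+ 3 by apply: lerX => //; exact: ltW.
have hW2 : z ^+ 3 * k%:R <= W.
  apply: le_trans hW; rewrite exprD mulnC exprM; apply: ler_pM => //.
    by rewrite exprn_ge0 // ltW.
have hW0 : 0 < W by apply: lt_le_trans hW; rewrite exprn_gt0.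
rewrite ler_pdivrMr ?mulr_gt0 // -[k%:R / eps]/(k%:R * z).
have hk0 : 0 <= k%:R :> R by rewrite ler0n.
have -> : k%:R * z = (eps * z) * (eps * z) * (k%:R * z) by rewrite hz !mul1r.
rewrite -!mulrA; apply: ler_wpM2l; first exact: ltW.
have -> : z * (eps * (z * (k%:R * z))) = eps * (z ^+ 3 * k%:R) by ring.
by apply: ler_wpM2l => //; exact: ltW.
Qed.
Lemma ceil_spec (eps : R) : 0 < eps -> eps^-1 <= 2 ^+ ceil_log2_inv eps.
Proof.
move=> he; rewrite /ceil_log2_inv; case: pselect => [h|hn].
  by case: ex_minnP.
exfalso; apply: hn.
have h0 : 0 <= eps^-1 by rewrite invr_ge0 ltW.
have hb := @archi_boundP _ eps^-1 h0.
exists (Num.Def.archi_bound eps^-1); apply: (le_trans (ltW hb)).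
by rewrite -natrX ler_nat ltnW // ltn_expl.
Qed.

Lemma bitlen_lt n : (n < 2 ^ bitlen n)%N.
Proof.
rewrite /bitlen; case: eqP => [->//|_]; exact: trunc_log_ltn.
Qed.

Lemma den_bound (Q A E : finType) (delta : E -> Q -> A -> Q -> rat) e p a q' :
  (denq (delta e p a q') <= (2 ^ max_bits delta)%N%:Z)%R.
Proof.
have h1 : (rat_bits (delta e p a q') <= max_bits delta)%N.
  rewrite /max_bits.
  apply: leq_trans (leq_bigmax e).
  apply: leq_trans (leq_bigmax p).
  apply: leq_trans (leq_bigmax a).
  exact: (leq_bigmax q').
have h2 : (bitlen `|denq (delta e p a q')|%N <= max_bits delta)%N.
  by apply: leq_trans h1; rewrite /rat_bits leq_addl.
have h3 : (`|denq (delta e p a q')|%N <= 2 ^ max_bits delta)%N.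
  apply: ltnW; apply: leq_trans (bitlen_lt _) _; by rewrite leq_exp2l.
rewrite -(gez0_abs (ltW (denq_gt0 (delta e p a q')))) lez_nat //.
Qed.
Lemma lev_bound (Q A E : finType) (delta : E -> Q -> A -> Q -> rat) e (sigma : strategy Q A) q
  (x0 : Q * A) (mu : {measure set (RunSpace x0) -> \bar R})
  (hmuc : forall pi, mu (cylinder x0 pi) = (cyl_prob delta e sigma q pi)%:E)
  (P : pred (frun Q A)) n :
  (mu [set rho : RunSpace x0 | P (Defs.prefix rho n)] <=
   (\sum_(s <- runs Q A n) (P (q, s))%:R * cyl_prob delta e sigma q (q, s))%:E)%E.
Proof.
set L := [seq (q0, s) | q0 <- index_enum Q, s <- runs Q A n].
pose d0 : frun Q A := (q, [::]).
pose C : nat -> set (RunSpace x0) := fun i => if P (nth d0 L i) then cylinder x0 (nth d0 L i) else set0.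
have mC i : measurable (C i).
  rewrite /C; case: ifP => _; last exact: measurable0.
  by apply: sub_sigma_algebra; eexists.
have cover : [set rho : RunSpace x0 | P (Defs.prefix rho n)] `<=` \big[setU/set0]_(i < size L) C i.
  move=> rho hP; rewrite -bigcup_mkord.
  have hin : Defs.prefix rho n \in L.
    rewrite (surjective_pairing (Defs.prefix rho n)); apply: allpairs_f.
      exact: mem_index_enum.
    exact: prefix_runs.
  exists (index (Defs.prefix rho n) L); first by rewrite /= index_mem.
  by rewrite /C nth_index // hP /cylinder /= prefix_size.
apply: le_trans (le_measure _ _ _ cover) _.
- by rewrite inE; exact: level_meas.
- by rewrite inE; apply: bigsetU_measurable => i _; exact: mC.
apply: le_trans (Boole_inequality _ _) _; first by move=> i _; exact: mC.
have -> : (\sum_(i < size L) mu (C i) =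
   \sum_(i < size L) ((P (nth d0 L i))%:R * cyl_prob delta e sigma q (nth d0 L i))%:E)%E.
  apply: eq_bigr => i _; rewrite /C; case: ifP => _.
    by rewrite hmuc mul1r.
  by rewrite measure0 mul0r.
rewrite sumEFin lee_fin.
rewrite -(big_mkord xpredT (fun i => (P (nth d0 L i))%:R * cyl_prob delta e sigma q (nth d0 L i))).
rewrite -(big_nth d0 xpredT (fun pi => (P pi)%:R * cyl_prob delta e sigma q pi)).
rewrite big_allpairs /= (bigD1 q) //= [X in _ + X]big1 ?addr0 // => q0 hq0.
apply: big1 => s _; by rewrite /cyl_prob /= (negbTE hq0) mul0r mulr0.
Qed.
Theorem mainTheorem3 :
  exists P : poly3,
  forall (Q A E : finType) (delta : E -> Q -> A -> Q -> rat),
  is_memdp delta ->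
  exists m : R -> nat,
    (forall eps : R, 0 < eps < 1 ->
       (m eps <= eval_poly3 P #|E| (2 ^ max_bits delta)%N (ceil_log2_inv eps))%N) /\
    (forall eps : R, 0 < eps < 1 ->
     forall (dflt : (E -> R) -> Q -> A -> Q -> (E -> R)),
       (forall b q a q', is_distr (dflt b q a q')) ->
     forall (b : E -> R), is_distr b ->
     forall (q : Q) (sigma : strategy Q A), is_strategy sigma ->
     forall (e : E) (x0 : Q * A) (mu : {measure set (RunSpace x0) -> \bar R}),
       is_run_measure delta x0 e sigma q mu ->
       (mu ([set rho : RunSpace x0 | nb_dstg_ge delta rho (m eps)]
            `&` NeverSmallBelief delta dflt b eps) <= eps%:E)%E).
Proof.
pose P : poly3 := [:: (24%N, (1%N, 4%N, 1%N)); (8%N, (2%N, 4%N, 0%N))].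
exists P => Q A E delta [hQ [hA [hE hdel]]].
have Hd e q a q' : 0 <= delta e q a q' by exact: (hdel e q a).1.
have Hs e q a : \sum_(q' : Q) delta e q a q' = 1 by exact: (hdel e q a).2.
set N := (2 ^ max_bits delta)%N.
exists (fun eps => eval_poly3 P #|E| N (ceil_log2_inv eps)).
split; first by move=> eps _; exact: leqnn.
move=> eps /andP [he0 he1] dflt Hdflt b Hb q sigma Hsig e x0 mu [hmu1 hmuc] /=.
set x := ceil_log2_inv eps.
set dd := (8 * N ^ 4 * (3 * x + #|E|))%N.
have hM : eval_poly3 P #|E| N x = (#|E| * dd)%N.
  rewrite /eval_poly3 !big_cons big_nil /= /dd; ring.
rewrite hM; set M := (#|E| * dd)%N.
have hN : (0 < N)%N by rewrite expn_gt0.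
have hdd : (0 < dd)%N.
  by rewrite /dd !muln_gt0 expn_gt0 addn_gt0 hE orbT andbT andbT.
have hHN := den_bound delta.
set S := (X in mu X).
case: (leP (b e) eps) => hbe.
  have -> : S = set0.
    apply/seteqP; split => rho // [_ hns].
    by have := hns 0%N e; rewrite ltNge hbe.
  by rewrite measure0 lee_fin ltW.
pose F n := [set rho : RunSpace x0 | (M <= dstg_count delta rho n)%N]
            `&` NeverSmallBelief delta dflt b eps.
have mNSB : measurable (NeverSmallBelief delta dflt b eps : set (RunSpace x0)).
  have -> : (NeverSmallBelief delta dflt b eps : set (RunSpace x0)) =
     \bigcap_n [set rho : RunSpace x0 | [forall e', eps < lk delta dflt b (Defs.prefix rho n) e']].
    apply/seteqP; split => rho /= h.
      by move=> n _; apply/forallP => e'; exact: h.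
    by move=> n e'; exact: (forallP (h n I)) e'.
  apply: bigcapT_measurable => n.
  exact: (level_meas (x0:=x0) (fun pi => [forall e', eps < lk delta dflt b pi e']) n).
have mC n : measurable [set rho : RunSpace x0 | (M <= dstg_count delta rho n)%N].
  have -> : [set rho : RunSpace x0 | (M <= dstg_count delta rho n)%N] =
            [set rho : RunSpace x0 | (fun pi : frun Q A => (M <= cntd delta pi.1 pi.2)%N) (Defs.prefix rho n)].
    by apply/seteqP; split => rho /=; rewrite dstg_countE.
  exact: (level_meas (x0:=x0) (fun pi : frun Q A => (M <= cntd delta pi.1 pi.2)%N) n).
have mF n : measurable (F n) by exact: measurableI.
have hEv : S = \bigcup_n F n.
  apply/seteqP; split => rho /=.
    by move=> [[n hn] hns]; exists n.
  by move=> [n _ [hn hns]]; split => //; exists n.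
rewrite hEv.
have ndF : nondecreasing_seq F.
  move=> n n' hnn'; apply/subsetPset => rho [h1 h2]; split => //=.
  exact: leq_trans h1 (dstg_count_mono delta rho hnn').
have hcvg := @nondecreasing_cvg_mu _ _ _ mu F mF (bigcupT_measurable _ mF) ndF.
rewrite -(cvg_lim _ hcvg) //.
apply: lime_le; first by apply/cvg_ex; eexists; exact: hcvg.
apply: nearW => n /=.
pose PP := fun pi : frun Q A => (M <= cntd delta pi.1 pi.2)%N && [forall e', eps < lk delta dflt b pi e'].
have sub : F n `<=` [set rho : RunSpace x0 | PP (Defs.prefix rho n)].
  move=> rho [h1 h2] /=; apply/andP; split; first by rewrite -dstg_countE.
  by apply/forallP => e'; exact: h2.
apply: le_trans (le_measure _ _ _ sub) _.
- by rewrite inE.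
- by rewrite inE; exact: (level_meas (x0:=x0) PP n).
apply: le_trans (lev_bound hmuc PP n) _.
rewrite lee_fin.
have hb0 : 0 < b e by apply: lt_trans hbe.
have he : 0 < eps <= 1 by rewrite he0 ltW.
have hfs := @final_sum _ _ _ delta Hd Hs dflt Hdflt N hHN e q sigma b Hsig Hb hb0 eps dd n he hbe hdd.
rewrite /PP /=; apply: le_trans hfs _.
exact: (final_arith #|E| he0 (ceil_spec he0) hN).
Qed.
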